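(* Let $\mathcal V$ be a variety with a difference term $d$, $A\in\mathcal V$, and $\alpha\in\operatorname{Con}A$ with $[\alpha,1_A]=0$. Let $r$ be an $\alpha$-trace, $B=A(\alpha)/\Delta_{\alpha1}$ with $x+y:=d^B(x,0,y)$ where $0$ is the $\Delta_{\alpha1}$-class of the diagonal, and $T_f(x_1/\alpha,\dots,x_n/\alpha)=\big(r(f(\bar x)),f(r(x_1),\dots,r(x_n))\big)/\Delta_{\alpha1}$ for each basic $f$ of arity $n$. Then $A\cong B\otimes^{T}A/\alpha$.
   Context: All algebras are in the sense of universal algebra. For $\alpha,\beta\in\operatorname{Con}A$, $[\alpha,\beta]$ is the term-condition (TC) commutator; $1_A$ is the total relation. $A(\alpha)=\{(x,y)\in A\times A:(x,y)\in\alpha\}$ is $\alpha$ viewed as a subalgebra of $A\times A$; $\Delta_{\alpha\beta}$ is the congruence of $A(\alpha)$ generated by $\{((u,u),(v,v)):(u,v)\in\beta\}$. An $\alpha$-trace is a map $r:A\to A$ with $(r(x),x)\in\alpha$ for all $x$ and $r(x)=r(y)$ whenever $(x,y)\in\alpha$. A difference term for $\mathcal V$ is a ternary term $d$ such that for every $A\in\mathcal V$, $\theta\in\operatorname{Con}A$, $(a,b)\in\theta$: $d(a,a,b)=b$ and $(d(a,b,b),a)\in[\theta,\theta]$. Given algebras $B,Q$ in the same signature $\tau$, a binary operation $+$ on $B$, and maps $T_f:Q^{\operatorname{ar}f}\to B$ ($f\in\tau$), the algebra $B\otimes^{T}Q$ has universe $B\times Q$ and operations $F_f((b_1,q_1),\dots,(b_n,q_n))=\big(f^B(b_1,\dots,b_n)+T_f(q_1,\dots,q_n),\,f^Q(q_1,\dots,q_n)\big)$.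 *)

(* Defs.v *)
From Stdlib Require Import ClassicalEpsilon.
From mathcomp Require Import all_boot.
Unset Printing Implicit Defensive.

Record signature := Signature { sym : Type; arity : sym -> nat }.
Arguments arity {s} _.

Record algebra (s : signature) := Algebra {
  carrier :> Type;
  op : forall f : sym s, ('I_(arity f) -> carrier) -> carrier }.
Arguments Algebra {s} carrier op.
Arguments op {s} a f _ : rename.
Arguments carrier {s} a : rename.

Inductive term (s : signature) (V : Type) : Type :=
| Var : V -> term s V
| App : forall f : sym s, ('I_(arity f) -> term s V) -> term s V.
Arguments Var {s V} _. Arguments App {s V} f _.

Fixpoint eval (s : signature) (A : algebra s) (V : Type) (e : V -> A) (t : term s V) : A :=
  match t with
  | Var v => e v
  | App f ts => op A f (fun i => @eval s A V e (ts i))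
  end.
Arguments eval {s} A {V} e t.


(** A satisfies every identity (p, q) in the set Sigma: this is membership
    in the variety Mod(Sigma). *)
Definition models (s : signature) (A : algebra s)
  (Sigma : term s nat -> term s nat -> Prop) : Prop :=
  forall p q, Sigma p q -> forall e : nat -> A, eval A e p = eval A e q.
Arguments models {s} A Sigma.

Definition is_congruence (s : signature) (A : algebra s) (th : A -> A -> Prop) : Prop :=
  (forall x, th x x) /\ (forall x y, th x y -> th y x) /\
  (forall x y z, th x y -> th y z -> th x z) /\
  (forall f (xs ys : 'I_(arity f) -> A),
      (forall i, th (xs i) (ys i)) -> th (op A f xs) (op A f ys)).
Arguments is_congruence {s} A th.

Definition total_rel (T : Type) : T -> T -> Prop := fun _ _ => True.
Arguments total_rel {T} _ _.

Definition Cg (s : signature) (C : algebra s) (S : C -> C -> Prop) (x y : C) : Prop :=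
  forall th, is_congruence C th -> (forall a b, S a b -> th a b) -> th x y.
Arguments Cg {s} C S x y.

Definition sum_env (T : Type) m n (a : 'I_m -> T) (c : 'I_n -> T) : 'I_m + 'I_n -> T :=
  fun v => match v with inl i => a i | inr j => c j end.
Arguments sum_env {T m n} a c v.

Definition centralizes (s : signature) (A : algebra s) (al be de : A -> A -> Prop) : Prop :=
  forall m n (t : term s ('I_m + 'I_n)%type) (a b : 'I_m -> A) (c e : 'I_n -> A),
    (forall i, al (a i) (b i)) -> (forall j, be (c j) (e j)) ->
    de (eval A (sum_env a c) t) (eval A (sum_env a e) t) ->
    de (eval A (sum_env b c) t) (eval A (sum_env b e) t).
Arguments centralizes {s} A al be de.

Definition tc_comm (s : signature) (A : algebra s) (al be : A -> A -> Prop) (x y : A) : Prop :=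
  forall de, is_congruence A de -> centralizes A al be de -> de x y.
Arguments tc_comm {s} A al be x y.

Definition env3 (T : Type) (a b c : T) : 'I_3 -> T :=
  fun i => match nat_of_ord i with 0 => a | 1 => b | _ => c end.
Arguments env3 {T} a b c i.

Definition is_difference_term (s : signature) (A : algebra s) (d : term s 'I_3) : Prop :=
  forall th, is_congruence A th -> forall a b, th a b ->
    eval A (env3 a a b) d = b /\ tc_comm A th th (eval A (env3 a b b) d) a.
Arguments is_difference_term {s} A d.

Definition is_trace (s : signature) (A : algebra s) (al : A -> A -> Prop) (r : A -> A) : Prop :=
  (forall x, al (r x) x) /\ (forall x y, al x y -> r x = r y).
Arguments is_trace {s} A al r.

Definition quot_carrier (T : Type) (th : T -> T -> Prop) : Type :=
  {P : T -> Prop | exists a, P = th a}.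
Arguments quot_carrier {T} th.

Definition cls (T : Type) (th : T -> T -> Prop) (a : T) : quot_carrier th :=
  exist _ (th a) (ex_intro _ a erefl).
Arguments cls {T} th a.

Definition rep (T : Type) (th : T -> T -> Prop) (x : quot_carrier th) : T :=
  proj1_sig (constructive_indefinite_description _ (proj2_sig x)).
Arguments rep {T th} x.

Definition quot_alg (s : signature) (A : algebra s) (th : A -> A -> Prop) : algebra s :=
  Algebra (quot_carrier th) (fun f xs => cls th (op A f (fun i => rep (xs i)))).
Arguments quot_alg {s} A th.

Section CongAlg.
Variables (s : signature) (A : algebra s) (al : A -> A -> Prop).
Hypothesis Hal : is_congruence A al.

Definition cong_pairs : Type := {p : A * A | al p.1 p.2}.

Lemma cong_pairs_op_proof f (xs : 'I_(arity f) -> cong_pairs) :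
  al (op A f (fun i => (proj1_sig (xs i)).1)) (op A f (fun i => (proj1_sig (xs i)).2)).
Proof. case: Hal => _ [_ [_ Hc]]; apply: Hc => i; exact: (proj2_sig (xs i)). Qed.

Definition cong_alg : algebra s :=
  Algebra cong_pairs (fun f xs =>
    exist (fun p : A * A => al p.1 p.2)
      (op A f (fun i => (proj1_sig (xs i)).1), op A f (fun i => (proj1_sig (xs i)).2))
      (cong_pairs_op_proof f xs)).

Definition diag (a : A) : cong_pairs :=
  exist (fun p : A * A => al p.1 p.2) (a, a) (proj1 Hal a).

Definition Delta (be : A -> A -> Prop) : cong_alg -> cong_alg -> Prop :=
  Cg cong_alg (fun p q => exists u v, be u v /\
                 proj1_sig p = (u, u) /\ proj1_sig q = (v, v)).

Definition B_alg : algebra s := quot_alg cong_alg (Delta (@total_rel (carrier A))).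

Definition zeroB (a : A) : B_alg := cls (Delta (@total_rel (carrier A))) (diag a).

(** x + y := d^B(x, 0, y); the diagonal element used for 0 is taken from a
    representative of x (all diagonal pairs lie in one Delta_{alpha 1}-class). *)
Definition plusB (d : term s 'I_3) (x y : B_alg) : B_alg :=
  eval B_alg (env3 x (zeroB (proj1_sig (rep x)).1) y) d.

Variable r : A -> A.
Hypothesis Hr : is_trace A al r.

Lemma T_proof f (xs : 'I_(arity f) -> A) :
  al (r (op A f xs)) (op A f (fun i => r (xs i))).
Proof.
case: Hal => _ [Hsym [Htr Hc]]; case: Hr => Hr1 _.
apply: Htr (Hr1 _) _; apply: Hc => i; apply: Hsym; exact: Hr1.
Qed.

Definition T_map (f : sym s) (q : 'I_(arity f) -> quot_alg A al) : B_alg :=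
  cls (Delta (@total_rel (carrier A)))
    (exist (fun p : A * A => al p.1 p.2)
       (r (op A f (fun i => rep (q i))), op A f (fun i => r (rep (q i))))
       (T_proof f (fun i => rep (q i)))).

End CongAlg.
Arguments cong_pairs {s A} al.
Arguments cong_alg {s A al} Hal.
Arguments diag {s A al} Hal a.
Arguments Delta {s A al} Hal be _ _.
Arguments B_alg {s A al} Hal.
Arguments zeroB {s A al} Hal a.
Arguments plusB {s A al} Hal d x y.
Arguments T_map {s A al} Hal {r} Hr f q.

Definition tensor (s : signature) (B Q : algebra s) (plus : B -> B -> B)
  (T : forall f : sym s, ('I_(arity f) -> Q) -> B) : algebra s :=
  Algebra (carrier B * carrier Q)%type (fun f xs =>
    (plus (op B f (fun i => (xs i).1)) (T f (fun i => (xs i).2)),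
     op Q f (fun i => (xs i).2))).
Arguments tensor {s B Q} plus T.

Definition is_hom (s : signature) (A C : algebra s) (h : A -> C) : Prop :=
  forall f (xs : 'I_(arity f) -> A), h (op A f xs) = op C f (fun i => h (xs i)).
Arguments is_hom {s A C} h.

Definition isomorphic (s : signature) (A C : algebra s) : Prop :=
  exists h : A -> C, is_hom h /\ bijective h.
Arguments isomorphic {s} A C.

(* Main.v *)
Require Import Defs.
From mathcomp Require Import all_boot.
From Stdlib Require Import ClassicalEpsilon FunctionalExtensionality PropExtensionality ProofIrrelevance.
Set Implicit Arguments.
Unset Strict Implicit.
Unset Printing Implicit Defensive.

Definition term_ind' (s : signature) (V : Type) (P : term s V -> Prop)
  (HV : forall v, P (Var v))
  (HA : forall f ts, (forall i, P (ts i)) -> P (App f ts)) : forall t, P t :=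
  fix F t := match t with Var v => HV v | App f ts => HA f ts (fun i => F (ts i)) end.

Lemma eval_compat (s : signature) (A : algebra s) (th : A -> A -> Prop) V
  (Hth : is_congruence A th) (e e' : V -> A) (t : term s V) :
  (forall v, th (e v) (e' v)) -> th (eval A e t) (eval A e' t).
Proof.
move=> He; elim/term_ind': t => [v|f ts IH] /=; first exact: He.
case: Hth => _ [_ [_ Hc]]; exact: Hc.
Qed.

Fixpoint tsubst (s : signature) V W (t : term s V) (sg : V -> term s W) : term s W :=
  match t with Var v => sg v | App f ts => App f (fun i => @tsubst s V W (ts i) sg) end.
Arguments tsubst {s V W} t sg.

Lemma eval_subst (s : signature) (A : algebra s) V W (e : W -> A) (t : term s V) sg :
  eval A e (tsubst t sg) = eval A (fun v => eval A e (sg v)) t.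
Proof.
elim/term_ind': t => [v|f ts IH] //=; congr (op A f); apply: functional_extensionality => i; exact: IH.
Qed.

Lemma env3_map (T U : Type) (g : T -> U) a b c :
  (fun i => g (env3 a b c i)) = env3 (g a) (g b) (g c).
Proof. apply: functional_extensionality => i; rewrite /env3; case: (nat_of_ord i) => [|[|]] //. Qed.

Lemma cls_eq (s : signature) (A : algebra s) (th : A -> A -> Prop) (Hth : is_congruence A th) x y :
  th x y -> cls th x = cls th y.
Proof.
move=> H; case: Hth => _ [Hs [Ht _]].
have E : th x = th y.
  apply: functional_extensionality => z; apply: propositional_extensionality; split.
  - move=> Hz; apply: Ht (Hs _ _ H) Hz.
  - move=> Hz; apply: Ht H Hz.
rewrite /cls; move: (ex_intro _ x _) (ex_intro _ y _); rewrite E => p q.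
by rewrite (proof_irrelevance _ p q).
Qed.

Lemma cls_inv (s : signature) (A : algebra s) (th : A -> A -> Prop) (Hth : is_congruence A th) x y :
  cls th x = cls th y -> th x y.
Proof.
move=> H; have := f_equal (@proj1_sig _ _) H => /= ->; case: Hth => Hr _; exact: Hr.
Qed.

Lemma rep_cls (s : signature) (A : algebra s) (th : A -> A -> Prop) (Hth : is_congruence A th) x :
  th x (rep (cls th x)).
Proof.
rewrite /rep; case: constructive_indefinite_description => a0 /= ->.
case: Hth => Hr _; exact: Hr.
Qed.

Lemma eval_quot (s : signature) (C : algebra s) (th : C -> C -> Prop) (Hth : is_congruence C th)
  V (e : V -> C) (t : term s V) :
  eval (quot_alg C th) (fun v => cls th (e v)) t = cls th (eval C e t).
Proof.
elim/term_ind': t => [v|f ts IH] //=.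
apply: cls_eq => //; case: (Hth) => _ [Hs [_ Hc]]; apply: Hc => i.
rewrite IH; apply: Hs; exact: rep_cls.
Qed.

Lemma Cg_cong (s : signature) (C : algebra s) (S : C -> C -> Prop) : is_congruence C (Cg C S).
Proof.
split; [|split; [|split]].
- move=> x th [Hr _] _; exact: Hr.
- move=> x y H th Hth HS; case: (Hth) => _ [Hs _]; apply: Hs; exact: H.
- move=> x y z H1 H2 th Hth HS; case: (Hth) => _ [_ [Ht _]]; apply: Ht (H1 _ Hth HS) (H2 _ Hth HS).
- move=> f xs ys H th Hth HS; case: (Hth) => _ [_ [_ Hc]]; apply: Hc => i; exact: H.
Qed.

Lemma sig_eq (T : Type) (P : T -> Prop) (p q : {x | P x}) : proj1_sig p = proj1_sig q -> p = q.
Proof. case: p q => [x px] [y py] /= E; subst; by rewrite (proof_irrelevance _ px py). Qed.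

Lemma eval_cong (s : signature) (A : algebra s) (al : A -> A -> Prop) (Hal : is_congruence A al)
  V (e : V -> cong_alg Hal) (t : term s V) :
  proj1_sig (eval (cong_alg Hal) e t) =
  (eval A (fun v => (proj1_sig (e v)).1) t, eval A (fun v => (proj1_sig (e v)).2) t).
Proof.
elim/term_ind': t => [v|f ts IH] /=; first by case: (proj1_sig (e v)).
congr pair; congr (op A f); apply: functional_extensionality => i; by rewrite IH.
Qed.

Definition dd (s : signature) (A : algebra s) (d : term s 'I_3) (x y z : A) : A :=
  eval A (env3 x y z) d.
Arguments dd {s A} d x y z.

Lemma total_cong (s : signature) (A : algebra s) : is_congruence A (@total_rel (carrier A)).
Proof. by split; [|split; [|split]]. Qed.

Lemma d_id (s : signature) (A : algebra s) d (Hd : is_difference_term A d) (a b : A) :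
  dd d a a b = b.
Proof. by case: (Hd _ (total_cong A) a b I). Qed.

Lemma d_right (s : signature) (A : algebra s) d (Hd : is_difference_term A d)
  (al : A -> A -> Prop) (Hal : is_congruence A al)
  (Hcomm : forall x y, tc_comm A al (@total_rel (carrier A)) x y -> x = y) (x y : A) :
  al x y -> dd d y x x = y.
Proof.
move=> H; have Hyx : al y x by case: Hal => _ [Hs _]; exact: Hs.
case: (Hd _ Hal y x Hyx) => _ Htc; apply: Hcomm => de Hde Hce; apply: Htc => //.
move=> m n t a b c e Ha Hc; apply: Hce => //.
Qed.

Lemma tc_eq (s : signature) (A : algebra s)
  (al : A -> A -> Prop)
  (Hcomm : forall x y, tc_comm A al (@total_rel (carrier A)) x y -> x = y) :
  centralizes A al (@total_rel (carrier A)) eq.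
Proof.
move=> m n t a b c e Ha Hc E; apply: Hcomm => de Hde Hce; apply: Hce => //.
rewrite E; case: Hde => Hr _; exact: Hr.
Qed.

Definition D3 (s : signature) V (d : term s 'I_3) (t1 t2 t3 : term s V) : term s V :=
  tsubst d (env3 t1 t2 t3).

Lemma eval_D3 (s : signature) (A : algebra s) V d (e : V -> A) t1 t2 t3 :
  eval A e (D3 d t1 t2 t3) = dd d (eval A e t1) (eval A e t2) (eval A e t3).
Proof. by rewrite /D3 eval_subst env3_map. Qed.

Lemma split_l m n (i : 'I_m) : split (lshift n i) = inl i.
Proof. exact: (unsplitK (inl i)). Qed.
Lemma split_r m n (i : 'I_n) : split (rshift m i) = inr i.
Proof. exact: (unsplitK (inr i)). Qed.

Definition envA (T : Type) n (u x : 'I_n -> T) (z : T) : 'I_(n + (n + 1)) -> T :=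
  fun i => match split i with inl k => u k | inr j => match split j with inl k => x k | inr _ => z end end.

Definition tcterm (s : signature) (d : term s 'I_3) (f : sym s) : term s ('I_(arity f + (arity f + 1)) + 'I_(arity f)) :=
  D3 d (App f (fun i => D3 d (Var (inl (unsplit (inl i))))
                              (Var (inl (unsplit (inr (unsplit (inl i))))))
                              (Var (inr i))))
       (App f (fun i => Var (inr i)))
       (Var (inl (unsplit (inr (unsplit (inr (ord0 : 'I_1))))))).

Lemma eval_tcterm (s : signature) (A : algebra s) d f (u x c : 'I_(arity f) -> A) (z : A) :
  eval A (sum_env (envA u x z) c) (tcterm d f) =
  dd d (op A f (fun i => dd d (u i) (x i) (c i))) (op A f c) z.
Proof.
rewrite /tcterm eval_D3 /=; congr dd.
- congr (op A f); apply: functional_extensionality => i.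
  by rewrite eval_D3 /= /envA !split_l !split_r split_l.
- by rewrite /envA /= !split_r.
Qed.

Lemma claim (s : signature) (A : algebra s) d (Hd : is_difference_term A d)
  (al : A -> A -> Prop) (Hal : is_congruence A al)
  (Hcomm : forall x y, tc_comm A al (@total_rel (carrier A)) x y -> x = y)
  f (x y w : 'I_(arity f) -> A) (z : A) :
  (forall i, al (x i) (y i)) ->
  dd d (op A f y) (op A f x) z = dd d (op A f (fun i => dd d (y i) (x i) (w i))) (op A f w) z.
Proof.
move=> Hxy.
have := @tc_eq s A al Hcomm _ _ (tcterm d f) (envA x x z) (envA y x z) x w.
rewrite !eval_tcterm.
have -> : (fun i => dd d (y i) (x i) (x i)) = y.
  by apply: functional_extensionality => i; apply: (d_right Hd Hal Hcomm (Hxy i)).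
apply.
- move=> i; rewrite /envA; case: split => [k|j]; first exact: Hxy.
  case: Hal => Hr _; case: split => *; exact: Hr.
- by [].
- have Ex : forall c : 'I_(arity f) -> A, (fun i => dd d (x i) (x i) (c i)) = c.
    by move=> c; apply: functional_extensionality => i; exact: d_id.
  by rewrite !Ex !d_id.
Qed.

Lemma env3_rel (T : Type) (th : T -> T -> Prop) a b c a' b' c' :
  th a a' -> th b b' -> th c c' -> forall i, th (env3 a b c i) (env3 a' b' c' i).
Proof. move=> Ha Hb Hc i; rewrite /env3; case: (nat_of_ord i) => [|[|]] //. Qed.

Lemma cls_rep (T : Type) (th : T -> T -> Prop) (x : quot_carrier th) : cls th (rep x) = x.
Proof.
apply: sig_eq => /=; rewrite /rep; case: constructive_indefinite_description => a0 /= E.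
by rewrite E.
Qed.

Definition Rrel (s : signature) (A : algebra s) (al : A -> A -> Prop) (d : term s 'I_3)
  (p q : cong_pairs al) : Prop :=
  forall z, dd d (proj1_sig p).2 (proj1_sig p).1 z = dd d (proj1_sig q).2 (proj1_sig q).1 z.

Lemma R_cong (s : signature) (A : algebra s) d (Hd : is_difference_term A d)
  (al : A -> A -> Prop) (Hal : is_congruence A al)
  (Hcomm : forall x y, tc_comm A al (@total_rel (carrier A)) x y -> x = y) :
  is_congruence (cong_alg Hal) (Rrel d).
Proof.
split; [|split; [|split]].
- by move=> x z.
- by move=> x y H z; rewrite H.
- by move=> x y w H1 H2 z; rewrite H1 H2.
- move=> f xs ys H z /=.
  rewrite (claim Hd Hal Hcomm (x := fun i => (proj1_sig (xs i)).1)
             (y := fun i => (proj1_sig (xs i)).2) (fun i => (proj1_sig (ys i)).1) z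
             (fun i => proj2_sig (xs i))).
  congr dd; congr (op A f); apply: functional_extensionality => i.
  rewrite H; apply: (d_right Hd Hal Hcomm); exact: (proj2_sig (ys i)).
Qed.

Lemma Delta_R (s : signature) (A : algebra s) d (Hd : is_difference_term A d)
  (al : A -> A -> Prop) (Hal : is_congruence A al)
  (Hcomm : forall x y, tc_comm A al (@total_rel (carrier A)) x y -> x = y) p q :
  Delta Hal (@total_rel (carrier A)) p q -> Rrel d p q.
Proof.
move=> H; apply: H; first exact: (R_cong Hd Hal Hcomm).
move=> a b [u [v [_ [Ea Eb]]]] z; rewrite /Rrel Ea Eb /=; by rewrite !(d_id Hd).
Qed.

Lemma Delta_gen (s : signature) (A : algebra s)
  (al : A -> A -> Prop) (Hal : is_congruence A al) (u v : A) :
  Delta Hal (@total_rel (carrier A)) (diag Hal u) (diag Hal v).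
Proof. move=> th Hth HS; apply: HS; by exists u, v. Qed.

Lemma Delta_shift_proof (s : signature) (A : algebra s) d (Hd : is_difference_term A d)
  (al : A -> A -> Prop) (Hal : is_congruence A al) (x y x' : A) :
  al x y -> al x' (dd d y x x').
Proof.
move=> H; have HH : al (dd d x x x') (dd d y x x').
  apply: eval_compat => //; case: (Hal) => Hr _; exact: env3_rel.
by rewrite (d_id Hd) in HH.
Qed.

Lemma Delta_shift (s : signature) (A : algebra s) d (Hd : is_difference_term A d)
  (al : A -> A -> Prop) (Hal : is_congruence A al)
  (Hcomm : forall x y, tc_comm A al (@total_rel (carrier A)) x y -> x = y)
  (p : cong_pairs al) (x' : A) :
  Delta Hal (@total_rel (carrier A)) p
    (exist (fun q : A * A => al q.1 q.2) (x', dd d (proj1_sig p).2 (proj1_sig p).1 x')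
       (Delta_shift_proof Hd Hal x' (proj2_sig p))).
Proof.
set x := (proj1_sig p).1; set y := (proj1_sig p).2.
have Hxy : al x y := proj2_sig p.
have HD : is_congruence (cong_alg Hal) (Delta Hal (@total_rel (carrier A))) := Cg_cong _.
have := eval_compat HD (e := env3 p (diag Hal x) (diag Hal x))
                         (e' := env3 p (diag Hal x) (diag Hal x')) d.
have E1 : eval (cong_alg Hal) (env3 p (diag Hal x) (diag Hal x)) d = p.
  apply: sig_eq; rewrite eval_cong (env3_map (fun q : cong_pairs al => (sval q).1)) (env3_map (fun q : cong_pairs al => (sval q).2)) /=.
  rewrite -/(dd d _ _ _) -/(dd d _ _ _) (d_id Hd) (d_right Hd Hal Hcomm Hxy).
  by rewrite /x /y; case: (proj1_sig p).
have E2 : eval (cong_alg Hal) (env3 p (diag Hal x) (diag Hal x')) d =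
  (exist (fun q : A * A => al q.1 q.2) (x', dd d y x x')
       (Delta_shift_proof Hd Hal x' (proj2_sig p))).
  apply: sig_eq; rewrite eval_cong (env3_map (fun q : cong_pairs al => (sval q).1)) (env3_map (fun q : cong_pairs al => (sval q).2)) /=.
  by rewrite -/(dd d _ _ _) -/(dd d _ _ _) (d_id Hd).
rewrite E1 E2; apply.
case: HD => Hr _; apply: env3_rel => //; exact: Delta_gen.
Qed.

Unset Implicit Arguments.
Set Strict Implicit.

Theorem corollary2p5 (s : signature)
  (Sigma : term s nat -> term s nat -> Prop) (d : term s 'I_3)
  (Hd : forall C : algebra s, models C Sigma -> is_difference_term C d)
  (A : algebra s) (HA : models A Sigma)
  (al : A -> A -> Prop) (Hal : is_congruence A al)
  (Hcomm : forall x y, tc_comm A al (@total_rel (carrier A)) x y -> x = y)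
  (r : A -> A) (Hr : is_trace A al r) :
  isomorphic A (tensor (plusB Hal d) (T_map Hal Hr)).
Proof.
have HdA := Hd A HA.
set De := Delta Hal (@total_rel (carrier A)).
have HD : is_congruence (cong_alg Hal) De := Cg_cong _.
have [Hr1 Hr2] := Hr.
have [Halr [Hals [Halt Halc]]] := Hal.
pose pr (a : A) : cong_pairs al := exist (fun p : A * A => al p.1 p.2) (r a, a) (Hr1 a).
pose h (a : A) : tensor (plusB Hal d) (T_map Hal Hr) := (cls De (pr a), cls al a).
have hom : is_hom h.
  move=> f a; rewrite /h /=; congr pair; last first.
    apply: cls_eq => //; apply: Halc => i; exact: rep_cls.
  have [HDr [HDs [HDt HDc]]] := HD.
  set a' := fun i => rep (cls al (a i)).
  have Ha' : forall i, al (a i) (a' i) := fun i => rep_cls Hal (a i).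
  pose p2 := exist (fun p : A*A => al p.1 p.2) (r (op A f a'), op A f (fun i => r (a' i)))
     (@T_proof _ _ _ Hal _ Hr f a').
  pose p1 := op (cong_alg Hal) f (fun i => rep (cls De (pr (a i)))).
  change (cls De (pr (op A f a)) = plusB Hal d (cls De p1) (cls De p2)).
  rewrite /plusB.
  set e := (sval (rep (cls De p1))).1.
  have -> : zeroB Hal e = cls De (diag Hal e) by [].
  rewrite -(env3_map (cls De)) (eval_quot HD).
  apply: cls_eq => //.
  set x0 := op A f (fun i => r (a i)).
  set q1 := op (cong_alg Hal) f (fun i => pr (a i)).
  have E : eval (cong_alg Hal) (env3 q1 (diag Hal x0) p2) d = pr (op A f a).
    apply: sig_eq; rewrite eval_cong (env3_map (fun q : cong_pairs al => (sval q).1)) (env3_map (fun q : cong_pairs al => (sval q).2)) /=.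
    have -> : r (op A f a') = r (op A f a).
      by apply: Hr2; apply: Hals; apply: Halc.
    have -> : (fun i => r (a' i)) = (fun i => r (a i)).
      by apply: functional_extensionality => i; apply: Hr2; apply: Hals.
    rewrite -/(dd d _ _ _) -/(dd d _ _ _) -/x0 (d_id HdA).
    by rewrite (d_right HdA Hal Hcomm (x := x0) (y := op A f a)) //; apply: Halc.
  apply: HDt (HDs _ _ (HDr _)) _; rewrite -E.
  apply: (eval_compat HD); apply: env3_rel.
  - apply: HDc => i; exact: (rep_cls HD).
  - exact: Delta_gen.
  - exact: HDr.
have inj : injective h.
  move=> a b E; have E1 := f_equal fst E; have E2 := f_equal snd E; rewrite /= in E1 E2.
  have Hab := cls_inv Hal E2.
  have Hrab : r a = r b := Hr2 _ _ Hab.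
  have := Delta_R HdA Hcomm (cls_inv HD E1) (r a) => /=.
  rewrite /Rrel /= (d_right HdA Hal Hcomm (Hr1 a)) Hrab (d_right HdA Hal Hcomm (Hr1 b)) //.
have surj : forall y, exists x, h x = y.
  case=> X Q.
  set c := rep Q.
  set p := rep X.
  set a := dd d (proj1_sig p).2 (proj1_sig p).1 (r c).
  have Hac : al a c.
    apply: Halt (Hr1 c); rewrite /a.
    rewrite -{2}(d_id HdA (proj1_sig p).1 (r c)).
    apply: eval_compat => //; apply: env3_rel => //; apply: Hals; exact: (proj2_sig p).
  exists a; rewrite /h; congr pair.
  - rewrite -(cls_rep X); apply: cls_eq => //.
    apply: (proj1 (proj2 HD)).
    have := Delta_shift HdA (Hal:=Hal) Hcomm p (r c).
    have -> : pr a = exist (fun q : A * A => al q.1 q.2)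
       (r c, dd d (sval p).2 (sval p).1 (r c))
       (Delta_shift_proof HdA Hal (r c) (proj2_sig p)).
      by apply: sig_eq => /=; rewrite (Hr2 _ _ Hac).
    by [].
  - by rewrite -(cls_rep Q); apply: cls_eq.
exists h; split => //.
pose g y := proj1_sig (constructive_indefinite_description _ (surj y)).
apply: (@Bijective _ _ h g) => [x|y]; rewrite /g.
- apply: inj; by case: constructive_indefinite_description => /= y ->.
- by case: (constructive_indefinite_description _ (surj y)).
Qed.
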